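(* Let $m,n$ be positive integers and let $\mathbf{a},\mathbf{b}\in\mathcal{T}^{n+1}$, $\mathbf{c},\mathbf{d}\in\mathcal{T}^{n}$, $\mathbf{f},\mathbf{g}\in\mathcal{T}^{m+1}$, $\mathbf{h},\mathbf{e}\in\mathcal{T}^{m}$. Set $\mathbf{a}'=\mathbf{a}/0$, $\mathbf{b}'=\mathbf{b}/0$, $\mathbf{c}'=0/\mathbf{c}$, $\mathbf{d}'=0/\mathbf{d}$, $\mathbf{f}'=\mathbf{f}/0$, $\mathbf{g}'=\mathbf{g}/0$, $\mathbf{h}'=0/\mathbf{h}$, $\mathbf{e}'=0/\mathbf{e}$, and define the $(2m+1)\times(2n+1)$ matrices \begin{align*} Q&=\mathbf{f}'^{*t}\mathbf{a}'+\mathbf{g}'^t\mathbf{c}'-\mathbf{e}'^t\mathbf{b}'^*+\mathbf{h}'^t\mathbf{d}',\\ R&=\mathbf{f}'^{*t}\mathbf{b}'+\mathbf{g}'^{*t}\mathbf{d}'+\mathbf{e}'^t\mathbf{a}'^*-\mathbf{h}'^{*t}\mathbf{c}',\\ S&=\mathbf{g}'^{*t}\mathbf{a}'-\mathbf{f}'^t\mathbf{c}'-\mathbf{h}'^t\mathbf{b}'-\mathbf{e}'^t\mathbf{d}'^*,\\ T&=\mathbf{g}'^{t}\mathbf{b}'-\mathbf{f}'^t\mathbf{d}'+\mathbf{h}'^{*t}\mathbf{a}'+\mathbf{e}'^t\mathbf{c}'^*. \end{align*} Then every entry of $Q,R,S,T$ lies in $\mathcal{T}$ (i.e. $Q,R,S,T\in\mathcal{T}^{(2m+1)\times(2n+1)}$),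 and \[ (\psi_Q\psi_Q^*+\psi_R\psi_R^*+\psi_S\psi_S^*+\psi_T\psi_T^* )(x,y)=(\psi_{\mathbf{a}}\psi^*_{\mathbf{a}}+\psi_{\mathbf{b}}\psi^*_{\mathbf{b}}+\psi_{\mathbf{c}}\psi^*_{\mathbf{c}}+\psi_{\mathbf{d}}\psi^*_{\mathbf{d}})(x^2)\,(\psi_{\mathbf{e}}\psi^*_{\mathbf{e}}+\psi_{\mathbf{f}}\psi^*_{\mathbf{f}}+\psi_{\mathbf{g}}\psi^*_{\mathbf{g}}+\psi_{\mathbf{h}}\psi^*_{\mathbf{h}})(y^2). \]
   Context: $\mathcal{R}$ is a commutative ring with identity equipped with an involutive ring automorphism $*$, extended to $\mathcal{R}[x^{\pm1}]$ and $\mathcal{R}[x^{\pm1},y^{\pm1}]$ by acting on coefficients and sending $x\mapsto x^{-1}$, $y\mapsto y^{-1}$. $\mathcal{T}$ is a multiplicatively closed subset of $\mathcal{R}\setminus\{0\}$ with $-1\in\mathcal{T}$ and $\mathcal{T}^*=\mathcal{T}$. For $\mathbf{a}=(a_0,\dots,a_{l-1})\in\mathcal{R}^l$: $\mathbf{a}^*=(a_{l-1}^*,\dots,a_0^* )$, $\phi_{\mathbf{a}}(x)=\sum_{i=0}^{l-1}a_ix^i$, $\psi_{\mathbf{a}}(x)=x^{1-l}\phi_{\mathbf{a}}(x^2)$, $\mathbf{a}/0=(a_0,0,a_1,0,\dots,0,a_{l-1})\in\mathcal{R}^{2l-1}$ and $0/\mathbf{a}=(0,a_0,0,a_1,\dots,0,a_{l-1},0)\in\mathcal{R}^{2l+1}$.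 Vectors are $1\times k$ matrices, $t$ is transpose, so $\mathbf{u}^t\mathbf{v}$ is an outer product matrix. For $A\in\mathcal{R}^{p\times q}$ with rows $\mathbf{a}_0,\dots,\mathbf{a}_{p-1}$, $\psi_A(x,y)=\sum_{i=0}^{p-1}\psi_{\mathbf{a}_i}(x)\,y^{2i+1-p}$. *)

(* Defs.v *)
From HB Require Import structures.
From mathcomp Require Import all_boot all_order all_algebra.
Set Implicit Arguments.
Unset Strict Implicit.
Unset Printing Implicit Defensive.
Import GRing.Theory Num.Theory.
Local Open Scope ring_scope.

Section Defs.
Variable R : comNzRingType.
Variable star : R -> R.

Definition vstar l (a : 'rV[R]_l) : 'rV[R]_l := \row_i star (a 0 (rev_ord i)).

(* a/0 = (a_0,0,a_1,0,...,0,a_l) for a of length l+1 (result has length 2l+1) *)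
Definition slash0 l (a : 'rV[R]_l.+1) : 'rV[R]_(l.*2.+1) :=
  \row_(k < l.*2.+1) \sum_(j < l.+1) (if (k == j.*2 :> nat) then a 0 j else 0).

(* 0/a = (0,a_0,0,a_1,...,0,a_{l-1},0) for a of length l (result length 2l+1) *)
Definition zslash l (a : 'rV[R]_l) : 'rV[R]_(l.*2.+1) :=
  \row_(k < l.*2.+1) \sum_(j < l) (if (k == j.*2.+1 :> nat) then a 0 j else 0).

(* Laurent polynomials in R[x^{+-1}] (resp. R[x^{+-1},y^{+-1}]) represented as
   formal finite sums of monomials (coefficient, exponent(s)); two such
   representations denote the same Laurent polynomial iff all coefficients agree. *)
Definition laur1 := seq (R * int).
Definition laur2 := seq (R * (int * int)).

Definition coef2 (p : laur2) (e : int * int) : R :=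
  \sum_(u <- p) (if u.2 == e then u.1 else 0).

Definition laur2_eq (p q : laur2) : Prop := forall e, coef2 p e = coef2 q e.

Definition mul1 (p q : laur1) : laur1 :=
  [seq (u.1 * v.1, u.2 + v.2) | u <- p, v <- q].
Definition mul2 (p q : laur2) : laur2 :=
  [seq (u.1 * v.1, (u.2.1 + v.2.1, u.2.2 + v.2.2)) | u <- p, v <- q].
Definition star1 (p : laur1) : laur1 := [seq (star u.1, - u.2) | u <- p].
Definition star2 (p : laur2) : laur2 :=
  [seq (star u.1, (- u.2.1, - u.2.2)) | u <- p].
Definition add1 (p q : laur1) : laur1 := p ++ q.
Definition add2 (p q : laur2) : laur2 := p ++ q.

Definition at_x2 (p : laur1) : laur2 := [seq (u.1, (2 * u.2, 0)) | u <- p].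
Definition at_y2 (p : laur1) : laur2 := [seq (u.1, (0, 2 * u.2)) | u <- p].

(* psi_a(x) = x^{1-l} phi_a(x^2) = sum_i a_i x^{2i+1-l} *)
Definition psi1 l (a : 'rV[R]_l) : laur1 :=
  [seq (a 0 i, (i.*2.+1)%:Z - l%:Z) | i <- enum 'I_l].

(* psi_A(x,y) = sum_i psi_{a_i}(x) y^{2i+1-p} *)
Definition psi2 p q (A : 'M[R]_(p, q)) : laur2 :=
  [seq (A i j, ((j.*2.+1)%:Z - q%:Z, (i.*2.+1)%:Z - p%:Z))
  | i <- enum 'I_p, j <- enum 'I_q].

Definition nrm1 l (a : 'rV[R]_l) : laur1 := mul1 (psi1 a) (star1 (psi1 a)).
Definition nrm2 p q (A : 'M[R]_(p, q)) : laur2 := mul2 (psi2 A) (star2 (psi2 A)).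

End Defs.

(* Main.v *)
From HB Require Import structures.
From mathcomp Require Import all_boot all_order all_algebra zify.
Require Import Defs.
From Stdlib Require Import Setoid Ring Morphisms.
Set Implicit Arguments.
Unset Strict Implicit.
Unset Printing Implicit Defensive.
Import GRing.Theory.
Local Open Scope ring_scope.
Section S.
Variable R : comNzRingType.
Variable star : {rmorphism R -> R}.
Hypothesis star_invol : involutive star.
Local Notation L := (laur2 R).
Local Notation coef := (@coef2 R).
Definition opp2 (p : L) : L := [seq (- u.1, u.2) | u <- p].
Definition one2 : L := [:: (1, 0)].
Definition sub2 (p q : L) : L := add2 p (opp2 q).


Lemma coefE p e : coef p e = \sum_(u <- p) (if u.2 == e then u.1 else 0).
Proof. by []. Qed.

Lemma coef_cat p q e : coef (p ++ q) e = coef p e + coef q e.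
Proof. by rewrite /coef2 big_cat. Qed.

Lemma coef_opp p e : coef (opp2 p) e = - coef p e.
Proof. rewrite /coef2 big_map -sumrN; apply: eq_bigr => u _ /=; by case: ifP; rewrite ?oppr0. Qed.

Lemma coef_mulS p q e : coef (mul2 p q) e =
  \sum_(u <- p) \sum_(v <- q) (if u.2 + v.2 == e then u.1 * v.1 else 0).
Proof. by rewrite /coef2 /mul2 big_allpairs_dep. Qed.

Lemma coef_mul p q e : coef (mul2 p q) e = \sum_(u <- p) u.1 * coef q (e - u.2).
Proof.
rewrite coef_mulS; apply: eq_bigr => u _; rewrite /coef2 mulr_sumr; apply: eq_bigr => v _.
have -> : (u.2 + v.2 == e) = (v.2 == e - u.2) by rewrite [RHS]eq_sym subr_eq eq_sym addrC.
by case: ifP; rewrite ?mulr0.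
Qed.

Lemma coef_star p e : coef (star2 star p) e = star (coef p (- e)).
Proof.
rewrite /coef2 big_map rmorph_sum; apply: eq_bigr => u _ /=.
have -> : ((- u.2.1, - u.2.2) == e) = (u.2 == - e).
  by case: u => r [x y]; case: e => a b /=; rewrite !xpair_eqE !eqr_oppLR.
by case: ifP; rewrite ?rmorph0.
Qed.

Lemma coef_one e : coef one2 e = if e == 0 then 1 else 0.
Proof. by rewrite /coef2 big_seq1 /= eq_sym. Qed.

Lemma Lsetoid : @Setoid_Theory (laur2 R) (@laur2_eq R).
Proof. split; [by move=> p e | by move=> p q H e | by move=> p q r H1 H2 e; rewrite H1]. Qed.

Lemma mul_comm (p q : L) : laur2_eq (mul2 p q) (mul2 q p).
Proof.
move=> e; rewrite !coef_mulS exchange_big; apply: eq_bigr => v _; apply: eq_bigr => u _.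
by rewrite addrC mulrC.
Qed.

Lemma Lth : @ring_theory (laur2 R) [::] one2 (@add2 R) (@mul2 R) sub2 opp2 (@laur2_eq R).
Proof.
split.
- by move=> p e; rewrite coef_cat /coef2 big_nil add0r.
- by move=> p q e; rewrite !coef_cat addrC.
- by move=> p q r e; rewrite !coef_cat addrA.
- by move=> p e; rewrite coef_mul /one2 big_seq1 /= subr0 mul1r.
- exact: mul_comm.
- move=> p q r e; rewrite !coef_mul big_allpairs_dep; apply: eq_bigr => u _.
  rewrite coef_mul mulr_sumr; apply: eq_bigr => v _ /=.
  by rewrite mulrA opprD addrA.
- move=> p q r e; rewrite coef_mul coef_cat !coef_mul big_cat; by [].
- by [].
- by move=> p e; rewrite /sub2 coef_cat coef_opp subrr /coef2 big_nil.
Qed.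
Lemma Lext : @ring_eq_ext (laur2 R) (@add2 R) (@mul2 R) opp2 (@laur2_eq R).
Proof.
split.
- by move=> p p' H q q' H' e; rewrite !coef_cat H H'.
- move=> p p' H q q' H' e.
  rewrite coef_mul.
  transitivity (coef (mul2 p q') e); first by rewrite coef_mul; apply: eq_bigr => u _; rewrite H'.
  rewrite (mul_comm p q') (mul_comm p' q') !coef_mul; apply: eq_bigr => u _; by rewrite H.
- by move=> p p' H e; rewrite !coef_opp H.
Qed.
Add Ring Lring : Lth (setoid Lsetoid Lext).


Lemma Lstar_ext p q : laur2_eq p q -> laur2_eq (star2 star p) (star2 star q).
Proof. by move=> H e; rewrite !coef_star H. Qed.

#[export] Instance Leqv : Equivalence (@laur2_eq R).
Proof. split; [exact: Seq_refl (Lsetoid) | exact: Seq_sym Lsetoid | exact: Seq_trans Lsetoid]. Qed.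
#[export] Instance add_Prop : Proper (@laur2_eq R ==> @laur2_eq R ==> @laur2_eq R) (@add2 R).
Proof. exact: (Radd_ext Lext). Qed.
#[export] Instance mul_Prop : Proper (@laur2_eq R ==> @laur2_eq R ==> @laur2_eq R) (@mul2 R).
Proof. exact: (Rmul_ext Lext). Qed.
#[export] Instance opp_Prop : Proper (@laur2_eq R ==> @laur2_eq R) opp2.
Proof. exact: (Ropp_ext Lext). Qed.
#[export] Instance sub_Prop : Proper (@laur2_eq R ==> @laur2_eq R ==> @laur2_eq R) sub2.
Proof. move=> ? ? H ? ? H'; rewrite /sub2; exact: (Radd_ext Lext _ _ H _ _ (Ropp_ext Lext _ _ H')). Qed.
#[export] Instance star_Prop : Proper (@laur2_eq R ==> @laur2_eq R) (star2 star).
Proof. move=> ? ? H; exact: Lstar_ext. Qed.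

Lemma star_add p q : star2 star (add2 p q) = add2 (star2 star p) (star2 star q).
Proof. by rewrite /star2 /add2 map_cat. Qed.
Lemma star_opp p : laur2_eq (star2 star (opp2 p)) (opp2 (star2 star p)).
Proof. by move=> e; rewrite coef_star !coef_opp coef_star rmorphN. Qed.
Lemma star_sub p q : laur2_eq (star2 star (sub2 p q)) (sub2 (star2 star p) (star2 star q)).
Proof. by rewrite /sub2 star_add star_opp. Qed.
Lemma star_mul p q : laur2_eq (star2 star (mul2 p q)) (mul2 (star2 star p) (star2 star q)).
Proof.
move=> e; rewrite coef_star !coef_mul rmorph_sum /star2 big_map; apply: eq_bigr => u _ /=.
rewrite rmorphM coef_star; congr (_ * star (coef _ _)).
by case: u => r [x y]; case: e => a b /=; congr (_, _); rewrite opprD opprK.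
Qed.
Lemma star_star p : laur2_eq (star2 star (star2 star p)) p.
Proof. by move=> e; rewrite !coef_star opprK star_invol. Qed.

Definition emb (phi : int -> int * int) (p : laur1 R) : L := [seq (u.1, phi u.2) | u <- p].

Lemma coef_emb phi p e : coef (emb phi p) e = \sum_(u <- p) (if phi u.2 == e then u.1 else 0).
Proof. by rewrite /coef2 big_map. Qed.

Lemma emb_mul phi (phiD : forall x y, phi (x + y) = phi x + phi y) p q :
  laur2_eq (emb phi (mul1 p q)) (mul2 (emb phi p) (emb phi q)).
Proof.
move=> e; rewrite coef_emb coef_mulS /mul1 big_allpairs_dep /emb big_map.
apply: eq_bigr => u _; rewrite big_map; apply: eq_bigr => v _ /=; by rewrite phiD.
Qed.

Lemma emb_star phi (phiN : forall x, phi (- x) = - phi x) p :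
  laur2_eq (emb phi (star1 star p)) (star2 star (emb phi p)).
Proof.
move=> e; rewrite coef_emb coef_star coef_emb rmorph_sum /star1 big_map.
apply: eq_bigr => u _ /=; rewrite phiN eqr_oppLR.
by case: ifP; rewrite ?rmorph0.
Qed.

Lemma emb_cat phi p q : emb phi (add1 p q) = add2 (emb phi p) (emb phi q).
Proof. by rewrite /emb /add1 map_cat. Qed.

Definition ex (l : nat) (i : nat) : int := (i.*2.+1)%:Z - l%:Z.

Lemma big_embpsi (F : R * (int * int) -> R) phi l (v : 'rV[R]_l) :
  \sum_(x <- emb phi (psi1 v)) F x = \sum_(i < l) F (v 0 i, phi (ex l i)).
Proof. by rewrite /emb /psi1 -map_comp big_map big_enum. Qed.

Lemma coef_psi1 phi l (v : 'rV[R]_l) e :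
  coef (emb phi (psi1 v)) e = \sum_(i < l) (if phi (ex l i) == e then v 0 i else 0).
Proof. by rewrite /coef2 big_embpsi. Qed.

Lemma if_sum (I : Type) (r : seq I) (b : bool) (F : I -> R) :
  (if b then \sum_(i <- r) F i else 0) = \sum_(i <- r) (if b then F i else 0).
Proof. by case: b => //; rewrite big1. Qed.

Lemma slash0_psi phi l (a : 'rV[R]_l.+1) :
  laur2_eq (emb phi (psi1 (slash0 a))) (emb (fun k => phi (2 * k)) (psi1 a)).
Proof.
move=> e; rewrite !coef_psi1.
under eq_bigr => k _ do rewrite mxE if_sum.
rewrite exchange_big /=; apply: eq_bigr => j _.
rewrite (eq_bigr (fun k : 'I_(l.*2.+1) => if (k == j.*2 :> nat) then (if phi (ex (l.*2.+1) k) == e then a 0 j else 0) else 0)); last by move=> k _; case: ifP; case: ifP.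
rewrite -big_mkcond (big_ord1_eq _ (fun k => if phi (ex (l.*2.+1) k) == e then a 0 j else 0)).
have -> : (j.*2 < l.*2.+1)%N by have := ltn_ord j; lia.
by rewrite /ex (_ : _ - _ = 2 * ((j.*2.+1)%:Z - (l.+1)%:Z)) //; lia.
Qed.

Lemma zslash_psi phi l (a : 'rV[R]_l) :
  laur2_eq (emb phi (psi1 (zslash a))) (emb (fun k => phi (2 * k)) (psi1 a)).
Proof.
move=> e; rewrite !coef_psi1.
under eq_bigr => k _ do rewrite mxE if_sum.
rewrite exchange_big /=; apply: eq_bigr => j _.
rewrite (eq_bigr (fun k : 'I_(l.*2.+1) => if (k == j.*2.+1 :> nat) then (if phi (ex (l.*2.+1) k) == e then a 0 j else 0) else 0)); last by move=> k _; case: ifP; case: ifP.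
rewrite -big_mkcond (big_ord1_eq _ (fun k => if phi (ex (l.*2.+1) k) == e then a 0 j else 0)).
have -> : (j.*2.+1 < l.*2.+1)%N by have := ltn_ord j; lia.
by rewrite /ex (_ : _ - _ = 2 * ((j.*2.+1)%:Z - l%:Z)) //; lia.
Qed.

Lemma vstar_psi phi (phiN : forall x, phi (- x) = - phi x) l (v : 'rV[R]_l) :
  laur2_eq (emb phi (psi1 (vstar star v))) (star2 star (emb phi (psi1 v))).
Proof.
move=> e; rewrite coef_star !coef_psi1 rmorph_sum (reindex_inj rev_ord_inj) /=.
apply: eq_bigr => i _; rewrite mxE rev_ordK.
have -> : ex l (rev_ord i) = - ex l i by rewrite /ex /=; have := ltn_ord i; lia.
rewrite phiN eqr_oppLR; by case: ifP; rewrite ?rmorph0.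
Qed.

Lemma coef_psi2 p q (M : 'M[R]_(p, q)) e : coef (psi2 M) e =
  \sum_(i < p) \sum_(j < q) (if (ex q j, ex p i) == e then M i j else 0).
Proof. by rewrite /coef2 /psi2 big_allpairs_dep big_enum; apply: eq_bigr => i _; rewrite big_enum. Qed.

Lemma psi2_add p q (M N : 'M[R]_(p, q)) : laur2_eq (psi2 (M + N)) (add2 (psi2 M) (psi2 N)).
Proof.
move=> e; rewrite coef_cat !coef_psi2 -big_split; apply: eq_bigr => i _.
rewrite -big_split; apply: eq_bigr => j _; rewrite mxE /=; by case: ifP; rewrite ?addr0.
Qed.

Lemma psi2_opp p q (M : 'M[R]_(p, q)) : laur2_eq (psi2 (- M)) (opp2 (psi2 M)).
Proof.
move=> e; rewrite coef_opp !coef_psi2 -sumrN; apply: eq_bigr => i _.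
rewrite -sumrN; apply: eq_bigr => j _; rewrite mxE; by case: ifP; rewrite ?oppr0.
Qed.

Lemma psi2_sub p q (M N : 'M[R]_(p, q)) : laur2_eq (psi2 (M - N)) (sub2 (psi2 M) (psi2 N)).
Proof. setoid_rewrite psi2_add; setoid_rewrite psi2_opp; reflexivity. Qed.

Definition phX (k : int) : int * int := (k, 0).
Definition phY (k : int) : int * int := (0, k).

Lemma psi2_mulmx p q (u : 'rV[R]_p) (v : 'rV[R]_q) :
  laur2_eq (psi2 (u^T *m v)) (mul2 (emb phY (psi1 u)) (emb phX (psi1 v))).
Proof.
move=> e; rewrite coef_psi2 coef_mulS big_embpsi; apply: eq_bigr => i _.
rewrite big_embpsi; apply: eq_bigr => j _ /=.
rewrite !mxE big_ord1 !mxE /phX /phY /=. have -> : ((0:int), ex p i) + (ex q j, 0) = (0 + ex q j, ex p i + 0) by []. by rewrite add0r addr0.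
Qed.

Lemma sX l (w : 'rV[R]_l.+1) : laur2_eq (emb phX (psi1 (slash0 w))) (at_x2 (psi1 w)).
Proof. exact: slash0_psi. Qed.
Lemma sY l (w : 'rV[R]_l.+1) : laur2_eq (emb phY (psi1 (slash0 w))) (at_y2 (psi1 w)).
Proof. exact: slash0_psi. Qed.
Lemma zX l (w : 'rV[R]_l) : laur2_eq (emb phX (psi1 (zslash w))) (at_x2 (psi1 w)).
Proof. exact: zslash_psi. Qed.
Lemma zY l (w : 'rV[R]_l) : laur2_eq (emb phY (psi1 (zslash w))) (at_y2 (psi1 w)).
Proof. exact: zslash_psi. Qed.
Lemma vX l (w : 'rV[R]_l) : laur2_eq (emb phX (psi1 (vstar star w))) (star2 star (emb phX (psi1 w))).
Proof. apply: vstar_psi => x; by rewrite /phX /= (_ : - (x, 0) = (- x, - 0)) // oppr0. Qed.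
Lemma vY l (w : 'rV[R]_l) : laur2_eq (emb phY (psi1 (vstar star w))) (star2 star (emb phY (psi1 w))).
Proof. apply: vstar_psi => x; by rewrite /phY /= (_ : - (0, x) = (- 0, - x)) // oppr0. Qed.

Lemma atx_nrm l (w : 'rV[R]_l) : laur2_eq (at_x2 (nrm1 star w))
   (mul2 (at_x2 (psi1 w)) (star2 star (at_x2 (psi1 w)))).
Proof.
rewrite /nrm1 -[at_x2 _]/(emb (fun k => (2 * k, 0)) _).
setoid_rewrite emb_mul; last by move=> x y; rewrite mulrDr (_ : (2 * x + 2 * y, 0) = (2*x, 0) + (2*y, 0)) // addr0.
setoid_rewrite emb_star; first reflexivity.
by move=> x; rewrite mulrN (_ : - (2 * x, 0) = (- (2 * x), - 0)) // oppr0.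
Qed.
Lemma aty_nrm l (w : 'rV[R]_l) : laur2_eq (at_y2 (nrm1 star w))
   (mul2 (at_y2 (psi1 w)) (star2 star (at_y2 (psi1 w)))).
Proof.
rewrite /nrm1 -[at_y2 _]/(emb (fun k => (0, 2 * k)) _).
setoid_rewrite emb_mul; last by move=> x y; rewrite mulrDr (_ : (0, 2 * x + 2 * y) = (0, 2*x) + (0, 2*y)) // addr0.
setoid_rewrite emb_star; first reflexivity.
by move=> x; rewrite mulrN (_ : - (0, 2 * x) = (- 0, - (2 * x))) // oppr0.
Qed.

Lemma atx_cat (p q : laur1 R) : at_x2 (add1 p q) = add2 (at_x2 p) (at_x2 q).
Proof. exact: (emb_cat (fun k => (2 * k, 0))). Qed.
Lemma aty_cat (p q : laur1 R) : at_y2 (add1 p q) = add2 (at_y2 p) (at_y2 q).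
Proof. exact: (emb_cat (fun k => (0, 2 * k))). Qed.

End S.
Arguments opp2 {R}. Arguments sub2 {R}. Arguments one2 {R}. Arguments emb {R}.

Section K.
Variable R : comNzRingType.
Variable star : {rmorphism R -> R}.
Hypothesis star_invol : involutive star.
Add Ring Lring : (Lth R) (setoid (Lsetoid R) (Lext R)).
Lemma cpsi2_add p q (M N : 'M[R]_(p, q)) e : coef2 (psi2 (M + N)) e = coef2 (psi2 M) e + coef2 (psi2 N) e.
Proof. by rewrite -coef_cat; apply: psi2_add. Qed.
Lemma cpsi2_opp p q (M : 'M[R]_(p, q)) e : coef2 (psi2 (- M)) e = - coef2 (psi2 M) e.
Proof. by rewrite -coef_opp; apply: psi2_opp. Qed.
Lemma lin_ppmp p q (X1 X2 X3 X4 : 'M[R]_(p,q)) : laur2_eq (psi2 (X1 + X2 - X3 + X4))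
  (add2 (sub2 (add2 (psi2 X1) (psi2 X2)) (psi2 X3)) (psi2 X4)).
Proof. move=> e. rewrite !cpsi2_add cpsi2_opp /sub2 !coef_cat coef_opp. done. Qed.
Lemma lin_pppm p q (X1 X2 X3 X4 : 'M[R]_(p,q)) : laur2_eq (psi2 (X1 + X2 + X3 - X4))
  (sub2 (add2 (add2 (psi2 X1) (psi2 X2)) (psi2 X3)) (psi2 X4)).
Proof. move=> e. by rewrite !cpsi2_add cpsi2_opp /sub2 !coef_cat coef_opp. Qed.
Lemma lin_pmmm p q (X1 X2 X3 X4 : 'M[R]_(p,q)) : laur2_eq (psi2 (X1 - X2 - X3 - X4))
  (sub2 (sub2 (sub2 (psi2 X1) (psi2 X2)) (psi2 X3)) (psi2 X4)).
Proof. move=> e. by rewrite !cpsi2_add !cpsi2_opp /sub2 !coef_cat !coef_opp. Qed.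
Lemma lin_pmpp p q (X1 X2 X3 X4 : 'M[R]_(p,q)) : laur2_eq (psi2 (X1 - X2 + X3 + X4))
  (add2 (add2 (sub2 (psi2 X1) (psi2 X2)) (psi2 X3)) (psi2 X4)).
Proof. move=> e. by rewrite !cpsi2_add !cpsi2_opp /sub2 !coef_cat !coef_opp. Qed.

Lemma key (m n : nat) (a b : 'rV[R]_n.+1) (c d : 'rV[R]_n) (f g : 'rV[R]_m.+1) (h e : 'rV[R]_m) :
  let a' := slash0 a in let b' := slash0 b in
  let c' := zslash c in let d' := zslash d in
  let f' := slash0 f in let g' := slash0 g in
  let h' := zslash h in let e' := zslash e in
  let vs l (v : 'rV[R]_l) := vstar star v in
  let Q := (vs _ f')^T *m a' + g'^T *m c' - e'^T *m vs _ b' + h'^T *m d' in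
  let R' := (vs _ f')^T *m b' + (vs _ g')^T *m d' + e'^T *m vs _ a'
            - (vs _ h')^T *m c' in
  let S := (vs _ g')^T *m a' - f'^T *m c' - h'^T *m b' - e'^T *m vs _ d' in
  let T' := g'^T *m b' - f'^T *m d' + (vs _ h')^T *m a' + e'^T *m vs _ c' in
      laur2_eq
        (add2 (add2 (add2 (nrm2 star Q) (nrm2 star R')) (nrm2 star S)) (nrm2 star T'))
        (mul2 (at_x2 (add1 (add1 (add1 (nrm1 star a) (nrm1 star b)) (nrm1 star c)) (nrm1 star d)))
              (at_y2 (add1 (add1 (add1 (nrm1 star e) (nrm1 star f)) (nrm1 star g)) (nrm1 star h)))).
Proof.
cbv beta zeta.
rewrite !atx_cat !aty_cat.
rewrite !atx_nrm !aty_nrm.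
rewrite /nrm2.
rewrite lin_ppmp lin_pppm lin_pmmm lin_pmpp.
rewrite !psi2_mulmx.
rewrite !vX !vY.
rewrite !sX !sY !zX !zY.
rewrite /sub2 !star_add !star_opp !star_mul !(@star_star _ _ star_invol).
ring.
Qed.
End K.

Section TT.
Variable R : comNzRingType.
Variable star : {rmorphism R -> R}.
Variable T : pred R.
Hypothesis T_star : forall t, (t \in T) <-> exists2 u, u \in T & t = star u.

Definition Ev {N} (w : 'rV[R]_N) := forall k : 'I_N, if odd k then (w 0 k = 0 : Prop) else (w 0 k \in T : Prop).
Definition Od {N} (w : 'rV[R]_N) := forall k : 'I_N, if odd k then (w 0 k \in T : Prop) else (w 0 k = 0 : Prop).

Lemma sum_if0 N (F : 'I_N -> R) (g : nat -> nat) k :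
  (forall j : 'I_N, k != g j) -> \sum_(j < N) (if k == g j then F j else 0) = 0.
Proof. by move=> H; rewrite big1 // => j _; rewrite (negbTE (H j)). Qed.

Lemma sum_if1 N (F : 'I_N -> R) (g : nat -> nat) k (ginj : injective g) (j0 : 'I_N) :
  k = g j0 -> \sum_(j < N) (if k == g j then F j else 0) = F j0.
Proof.
move=> hk0; rewrite (bigD1 j0) //= hk0 eqxx big1 ?addr0 // => j hj.
case: ifP => // /eqP hk; exfalso; move/eqP: hj; apply; apply/val_inj/ginj; by rewrite -hk.
Qed.

Lemma slash0_Ev l (a : 'rV[R]_l.+1) : (forall i, a 0 i \in T) -> Ev (slash0 a).
Proof.
move=> Ha k; rewrite mxE; have hk := odd_double_half k; have kl := ltn_ord k.
case ok: (odd k).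
  by apply: sum_if0 => j; apply/negP => /eqP hj; move: ok; rewrite hj odd_double.
rewrite ok /= in hk.
have jl : (k./2 < l.+1)%N by lia.
rewrite (@sum_if1 _ _ _ _ double_inj (Ordinal jl)) //=; by rewrite hk.
Qed.

Lemma zslash_Od l (a : 'rV[R]_l) : (forall i, a 0 i \in T) -> Od (zslash a).
Proof.
move=> Ha k; rewrite mxE; have hk := odd_double_half k; have kl := ltn_ord k.
case ok: (odd k); last first.
  by apply: (@sum_if0 _ _ (fun j => j.*2.+1)) => j; apply/negP => /eqP hj; move: ok; rewrite hj /= odd_double.
rewrite ok /= in hk.
have jl : (k./2 < l)%N by lia.
have ginj : injective (fun j => j.*2.+1) by move=> x y [] /double_inj.
rewrite (@sum_if1 _ _ _ _ ginj (Ordinal jl)) //=; by rewrite -hk add1n.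
Qed.

Lemma starT t : t \in T -> star t \in T.
Proof. by move=> ht; apply/T_star; exists t. Qed.

Lemma vstar_Ev l (w : 'rV[R]_l.*2.+1) : Ev w -> Ev (vstar star w).
Proof.
move=> H k; rewrite mxE; move: (H (rev_ord k)) => /=.
have kl := ltn_ord k.
rewrite subSS oddB ?odd_double //=.
by case: (odd k) => /= [->|/starT]; rewrite ?rmorph0.
Qed.

Lemma vstar_Od l (w : 'rV[R]_l.*2.+1) : Od w -> Od (vstar star w).
Proof.
move=> H k; rewrite mxE; move: (H (rev_ord k)) => /=.
have kl := ltn_ord k.
rewrite subSS oddB ?odd_double //=.
by case: (odd k) => /= [/starT|->]; rewrite ?rmorph0.
Qed.

Lemma mulE p q (u : 'rV[R]_p) (v : 'rV[R]_q) i j : (u^T *m v) i j = u 0 i * v 0 j.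
Proof. by rewrite !mxE big_ord1 !mxE. Qed.
Lemma addE p q (M N : 'M[R]_(p, q)) i j : (M + N) i j = M i j + N i j.
Proof. by rewrite mxE. Qed.
Lemma oppE p q (M : 'M[R]_(p, q)) i j : (- M) i j = - M i j.
Proof. by rewrite mxE. Qed.
End TT.

Theorem lemma3p2 (R : comNzRingType) (star : {rmorphism R -> R})
  (star_invol : involutive star)
  (T : pred R)
  (T_nz : forall t, t \in T -> t != 0)
  (T_mul : forall s t, s \in T -> t \in T -> s * t \in T)
  (T_m1 : -1 \in T)
  (T_star : forall t, (t \in T) <-> exists2 u, u \in T & t = star u)
  (m n : nat) (m_gt0 : (0 < m)%N) (n_gt0 : (0 < n)%N)
  (a b : 'rV[R]_n.+1) (c d : 'rV[R]_n) (f g : 'rV[R]_m.+1) (h e : 'rV[R]_m)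
  (Ha : forall i, a 0 i \in T) (Hb : forall i, b 0 i \in T)
  (Hc : forall i, c 0 i \in T) (Hd : forall i, d 0 i \in T)
  (Hf : forall i, f 0 i \in T) (Hg : forall i, g 0 i \in T)
  (Hh : forall i, h 0 i \in T) (He : forall i, e 0 i \in T) :
  let a' := slash0 a in let b' := slash0 b in
  let c' := zslash c in let d' := zslash d in
  let f' := slash0 f in let g' := slash0 g in
  let h' := zslash h in let e' := zslash e in
  let vs l (v : 'rV[R]_l) := vstar star v in
  let Q := (vs _ f')^T *m a' + g'^T *m c' - e'^T *m vs _ b' + h'^T *m d' in
  let R' := (vs _ f')^T *m b' + (vs _ g')^T *m d' + e'^T *m vs _ a'
            - (vs _ h')^T *m c' in
  let S := (vs _ g')^T *m a' - f'^T *m c' - h'^T *m b' - e'^T *m vs _ d' in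
  let T' := g'^T *m b' - f'^T *m d' + (vs _ h')^T *m a' + e'^T *m vs _ c' in
  [/\ forall i j, Q i j \in T, forall i j, R' i j \in T,
      forall i j, S i j \in T, forall i j, T' i j \in T &
      laur2_eq
        (add2 (add2 (add2 (nrm2 star Q) (nrm2 star R')) (nrm2 star S)) (nrm2 star T'))
        (mul2 (at_x2 (add1 (add1 (add1 (nrm1 star a) (nrm1 star b)) (nrm1 star c)) (nrm1 star d)))
              (at_y2 (add1 (add1 (add1 (nrm1 star e) (nrm1 star f)) (nrm1 star g)) (nrm1 star h))))].

Proof.
have K := key star_invol a b c d f g h e.
cbv beta zeta.
have ha := slash0_Ev Ha; have hb := slash0_Ev Hb; have hf := slash0_Ev Hf; have hg := slash0_Ev Hg.
have hc := zslash_Od Hc; have hd := zslash_Od Hd; have hh := zslash_Od Hh; have he := zslash_Od He.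
have hva := vstar_Ev T_star ha; have hvb := vstar_Ev T_star hb.
have hvf := vstar_Ev T_star hf; have hvg := vstar_Ev T_star hg.
have hvc := vstar_Od T_star hc; have hvd := vstar_Od T_star hd.
have hvh := vstar_Od T_star hh.
have fin : forall x y z, x \in T -> y \in T -> (z = x * y \/ z = - (x * y)) -> z \in T.
  move=> x y z hx hy; case=> ->; first exact: (T_mul _ _ hx hy).
  by rewrite -mulN1r; apply: (T_mul _ _ T_m1); apply: (T_mul _ _ hx hy).
split; try exact: K;
  move=> i j; move: (hf i) (hg i) (hh i) (he i) (hvf i) (hvg i) (hvh i)
    (ha j) (hb j) (hc j) (hd j) (hva j) (hvb j) (hvc j) (hvd j);
  case: (odd i); case: (odd j) => /= h1 h2 h3 h4 h5 h6 h7 h8 h9 h10 h11 h12 h13 h14 h15;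
  rewrite !(addE, oppE, mulE) ?h1 ?h2 ?h3 ?h4 ?h5 ?h6 ?h7 ?h8 ?h9 ?h10 ?h11 ?h12 ?h13 ?h14 ?h15
    ?mul0r ?mulr0; rewrite ?add0r ?addr0 ?oppr0 ?subr0 ?sub0r ?add0r ?addr0 ?sub0r;
  (apply: fin; [ .. | by [left | right]]; assumption).
Qed.
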